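(* Let $H$ be a digraph (possibly with loops) and let $D$ be an $H$-colored quasi-transitive digraph such that every directed $3$-cycle of $D$ is an $H$-cycle. For every $k \geq 2$, $D$ has a $(k,H)$-kernel.
   Context: All digraphs are finite. A digraph $D$ is quasi-transitive if for all distinct $u,v\in V(D)$, whenever there is a directed $uv$-path of length $2$, $u$ and $v$ are joined by an arc (in some direction). $D$ has no loops and comes with a map $\rho: A(D)\to V(H)$. For a walk $W=(x_0,\ldots,x_n)$ in $D$, there is an obstruction on $x_i$ if $(\rho(x_{i-1},x_i),\rho(x_i,x_{i+1})) \notin A(H)$; for an open walk this is considered at internal vertices $x_i$, $1\le i\le n-1$, for a closed walk at all $i\in\{0,\ldots,n-1\}$ with indices modulo $n$. $O_H(W)$ is the set of indices with an obstruction; the $H$-length is $l_H(W)=|O_H(W)|+1$ for open $W$ and $|O_H(W)|$ for closed $W$. An $H$-cycle is a directed cycle with no obstructions. A $(k,H)$-kernel ($k\ge2$) is a set $S\subseteq V(D)$ such that for every two distinct $u,v\in S$ every directed $uv$-path in $D$ has $H$-length at least $k$, and for every $x\in V(D)\setminus S$ there is a directed path from $x$ to a vertex of $S$ of $H$-length at most $k-1$. *)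

(* Defs.v *)
From mathcomp Require Import all_boot.
Set Implicit Arguments. Unset Strict Implicit. Unset Printing Implicit Defensive.

(* An H-colouring of D is rho : V -> V -> VH; only the
   values rho x y with arc x y are meaningful. *)

Section Defs.
Variables (V VH : finType) (arc : rel V) (HA : rel VH) (rho : V -> V -> VH).

Definition loopless : Prop := forall x, ~~ arc x x.

Definition quasi_transitive : Prop :=
  forall u v w, u != w -> arc u v -> arc v w -> arc u w || arc w u.

(* A walk W = (x_0, ..., x_n) is represented by its first vertex x = x_0 and
   the list p = [x_1; ...; x_n]. *)
Definition vtx (x : V) (p : seq V) (i : nat) : V := nth x (x :: p) i.

Definition open_obstruction (x : V) (p : seq V) (i : nat) : bool :=
  ~~ HA (rho (vtx x p i.-1) (vtx x p i)) (rho (vtx x p i) (vtx x p i.+1)).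

Definition open_O_H (x : V) (p : seq V) : seq nat :=
  [seq i <- iota 1 (size p).-1 | open_obstruction x p i].

Definition open_H_length (x : V) (p : seq V) : nat := size (open_O_H x p) + 1.

Definition dipath (x : V) (p : seq V) : bool := path arc x p && uniq (x :: p).

Definition dipath_from_to (u v : V) (p : seq V) : bool :=
  dipath u p && (last u p == v).

(* A closed walk (x_0, ..., x_{n-1}, x_n = x_0) is represented by the list
   c = [x_0; ...; x_{n-1}] (n = size c); indices are taken modulo n. *)
Definition cvtx (c : seq V) (x0 : V) (i : nat) : V := nth x0 c (i %% size c).

Definition closed_obstruction (c : seq V) (x0 : V) (i : nat) : bool :=
  ~~ HA (rho (cvtx c x0 (i + size c - 1)) (cvtx c x0 i))
        (rho (cvtx c x0 i) (cvtx c x0 i.+1)).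

Definition dicycle (c : seq V) : bool := (1 < size c) && cycle arc c && uniq c.

Definition H_cycle (c : seq V) : bool :=
  dicycle c &&
  match c with
  | [::] => true
  | x0 :: _ => all (fun i => ~~ closed_obstruction c x0 i) (iota 0 (size c))
  end.

Definition kH_kernel (k : nat) (S : {set V}) : Prop :=
  (forall u v, u \in S -> v \in S -> u != v ->
     forall p, dipath_from_to u v p -> k <= open_H_length u p) /\
  (forall x, x \notin S ->
     exists s, exists p, [/\ s \in S, dipath_from_to x s p & open_H_length x p <= k - 1]).

End Defs.

(* Main.v *)
Require Import Defs.
From mathcomp Require Import all_boot.
From mathcomp Require Import zify.

Section Proof.
Variables (V VH : finType) (arc : rel V) (HA : rel VH) (rho : V -> V -> VH).
Hypothesis QT : quasi_transitive arc.
Hypothesis H3 : forall c : seq V, size c = 3 -> dicycle arc c -> H_cycle arc HA rho c.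

Lemma minpath x s : connect arc x s ->
  exists p, dipath_from_to arc x s p /\ open_O_H HA rho x p = [::].
Proof.
move=> /connectP [p0 Hp0 ->].
case: (shortenP Hp0) => p1 Hp1 Hu1 _.
pose P := fun n => [exists t : n.-tuple V, path arc x t && uniq (x :: t) && (last x t == last x p1)].
have exP : exists n, P n.
  exists (size p1); apply/existsP; exists (in_tuple p1).
  apply/andP; split; [apply/andP; split|]; [exact Hp1 | exact Hu1 | exact: eqxx].
case: (ex_minnP exP) => n /existsP [t /andP[/andP[Hpt Hut] /eqP Hlt]] Hmin.
have key : forall q1 b c q2, tval t = q1 ++ b :: c :: q2 ->
    HA (rho (last x q1) b) (rho b c).
  move=> q1 b c q2 Et.
  move: Hpt Hut Hlt; rewrite Et => Hp Hu Hl.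
  move: Hp; rewrite cat_path /= => /andP[Hq1 /andP[Hab /andP[Hbc Hq2]]].
  move: (Hu); rewrite -cat_cons cat_uniq /= => /andP[_ /andP[Hn /andP[Hbn _]]].
  move: Hn; rewrite negb_or => /andP[Hb /norP[Hc _]].
  have Ha : last x q1 \in x :: q1 by apply: mem_last.
  have Hac : last x q1 != c by apply/eqP => E; rewrite -E Ha in Hc.
  have Hab' : last x q1 != b by apply/eqP => E; rewrite -E Ha in Hb.
  have Hbc' : b != c by move: Hbn; rewrite inE negb_or => /andP[].
  case/orP: (QT _ _ _ Hac Hab Hbc) => [Hac'|Hca].
    have : P (size (q1 ++ c :: q2)).
      apply/existsP; exists (in_tuple (q1 ++ c :: q2)).
      rewrite /= cat_path /= Hq1 Hac' Hq2 /=.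
      rewrite -Hl !last_cat /= eqxx andbT.
      rewrite -[_ && _]/(uniq (x :: q1 ++ c :: q2)).
      apply: (subseq_uniq _ Hu).
      have -> : x :: q1 ++ c :: q2 = (x :: q1) ++ c :: q2 by [].
      have -> : x :: q1 ++ [:: b, c & q2] = (x :: q1) ++ b :: c :: q2 by [].
      apply: cat_subseq; first exact: subseq_refl.
      by rewrite subseq_cons.
    move/Hmin; have := size_tuple t; rewrite Et !size_cat /= => <-; by rewrite addnS ltnn.
  have := H3 (cons (last x q1) [:: b; c]) erefl.
  rewrite /dicycle /= Hab Hbc Hca !inE negb_or Hab' Hac Hbc' /=.
  move=> /(_ isT) /andP[_] /and3P[_ H1 _].
  by move: H1; rewrite /closed_obstruction negbK.
exists t; split.
  by rewrite /dipath_from_to /dipath Hpt Hut Hlt eqxx.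
apply/eqP; rewrite -[_ == _]negbK -has_filter; apply/hasPn => i.
rewrite mem_iota => /andP[Hi1 Hi2].
rewrite /open_obstruction negbK.
have Hsz := size_drop i.-1 t.
case E: (drop i.-1 t) Hsz => [|b [|c q2]] Hsz.
- move: Hsz Hi2 Hi1 => /=; lia.
- move: Hsz Hi2 Hi1 => /=; lia.
have Et : tval t = take i.-1 t ++ b :: c :: q2 by rewrite -E cat_take_drop.
have Hs : size (take i.-1 t) = i.-1 by rewrite size_takel //; lia.
move: (take i.-1 t) Et Hs => q1 Et Hs.
move: (key _ _ _ _ Et).
have -> : i = (size q1).+1 by rewrite Hs; lia.
rewrite /vtx Et /=.
rewrite nth_cat ltnn subnn /= nth_cat ltnNge leqnSn /= subSnn /=.
rewrite -cat_cons nth_cat /= ltnSn.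
by have := nth_last x (x :: q1) => /= ->.
Qed.

End Proof.

Theorem corollary23 (V VH : finType) (arc : rel V) (HA : rel VH)
    (rho : V -> V -> VH) :
  loopless arc ->
  quasi_transitive arc ->
  (forall c : seq V, size c = 3 -> dicycle arc c -> H_cycle arc HA rho c) ->
  forall k : nat, 2 <= k -> exists S : {set V}, kH_kernel arc HA rho k S.
Proof.
move=> _ QT H3 k Hk.
exists [set y | [forall z, connect arc y z ==> (connect arc z y && (enum_rank y <= enum_rank z))]].
split.
  move=> u v; rewrite !inE => /forallP Hu /forallP Hv Huv p /andP[/andP[Hp _] /eqP Hl].
  have Cuv : connect arc u v by apply/connectP; exists p.
  move: (Hu v); rewrite Cuv /= => /andP[Cvu Le1].
  move: (Hv u); rewrite Cvu /= => /andP[_ Le2].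
  have : enum_rank u = enum_rank v by apply: val_inj; apply/eqP; rewrite eqn_leq Le1 Le2.
  by move/enum_rank_inj => E; rewrite E eqxx in Huv.
move=> x Hx.
pose t := [arg min_(y < x | connect arc x y) #|connect arc y|].
have [Ct Tmin] : connect arc x t /\ forall z, connect arc x z -> #|connect arc t| <= #|connect arc z|.
  by rewrite /t; case: arg_minnP => [|y Hy Hm]; [exact: connect0 | split].
have Tterm : forall z, connect arc t z -> connect arc z t.
  move=> z Ctz.
  have Sub : connect arc z \subset connect arc t.
    by apply/subsetP => w; rewrite !inE => Czw; apply: connect_trans Ctz Czw.
  have := subset_leqif_card Sub => [[Hle Heq]].
  have : #|connect arc z| == #|connect arc t|.
    by rewrite eqn_leq Hle Tmin // (connect_trans Ct Ctz).
  rewrite Heq => /subsetP /(_ t); rewrite !inE; apply; exact: connect0.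
pose s := [arg min_(y < t | connect arc t y) nat_of_ord (enum_rank y)].
have [Cs Smin] : connect arc t s /\ forall z, connect arc t z -> enum_rank s <= enum_rank z.
  by rewrite /s; case: arg_minnP => [|y Hy Hm]; [exact: connect0 | split].
have Sin : s \in [set y | [forall z, connect arc y z ==> (connect arc z y && (enum_rank y <= enum_rank z))]].
  rewrite inE; apply/forallP => z; apply/implyP => Csz.
  have Ctz := connect_trans Cs Csz.
  by rewrite Smin // andbT; apply: connect_trans (Tterm _ Ctz) Cs.
have Cxs := connect_trans Ct Cs.
case: (@minpath V VH arc HA rho QT H3 _ _ Cxs) => p [Hp Ho].
exists s, p; split => //.
by rewrite /open_H_length Ho /=; lia.
Qed.
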